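(* Let $d\geq 2$ and let $\mathcal{CP}$ be a $d$-dimensional cube packing with $2^d-\delta$ cubes, with representatives $x^1,\dots,x^{2^d-\delta}\in\{0,1,2,3\}^d$. Then for every coordinate $i\in\{1,\dots,d\}$ and every $j\in\{0,1,2,3\}$, the induced cube packing on layer $j$ along coordinate $i$ has at least $2^{d-1}-\delta$ cubes; that is, the number of indices $k$ with $x^k_i\in\{j, j+1 \bmod 4\}$ is at least $2^{d-1}-\delta$.
   Context: A $d$-dimensional cube packing is a $4\mathbb{Z}^d$-invariant set of pairwise disjoint translates $z+[0,2[^d$, $z\in\mathbb{Z}^d$; it is described by the set of representatives $x\in\{0,1,2,3\}^d$ of the $4\mathbb{Z}^d$-orbits of its cubes, two cubes with representatives $x,x'$ being disjoint iff $|x_i-x'_i|=2$ for some coordinate $i$. Its number of cubes is the number of orbits. Given a coordinate $i$ and $j\in\{0,1,2,3\}$, the induced cube packing on layer $j$ is the $(d-1)$-dimensional cube packing with representatives $(x^k_1,\dots,x^k_{i-1},x^k_{i+1},\dots,x^k_d)$ for all representatives $x^k$ with $x^k_i\equiv j$ or $j+1 \pmod 4$. *)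

(* Defs.v *)
From mathcomp Require Import all_boot all_order all_algebra.
Set Implicit Arguments. Unset Strict Implicit. Unset Printing Implicit Defensive.

(* A point of {0,1,2,3}^d : a representative of a 4Z^d-orbit of cubes z+[0,2[^d. *)
Definition rep (d : nat) := {ffun 'I_d -> 'I_4}.

Definition cubes_disjoint d (x y : rep d) : bool :=
  [exists i : 'I_d, (x i + 2 == y i :> nat) || (y i + 2 == x i :> nat)].

(* A d-dimensional cube packing, described by its set of representatives
   (one per 4Z^d-orbit); its number of cubes is #|X|. *)
Definition cube_packing d (X : {set rep d}) : Prop :=
  {in X &, forall x y, x != y -> cubes_disjoint x y}.

Definition layer d (X : {set rep d}) (i : 'I_d) (j : 'I_4) : {set rep d} :=
  [set x in X | (x i == j :> nat) || (x i == (j + 1) %% 4 :> nat)].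

(* Main.v *)
Require Import Defs.
From mathcomp Require Import all_boot all_order all_algebra.
From mathcomp Require Import zify.
Import GRing.Theory Num.Theory.
Local Open Scope ring_scope.

Definition cls (v : 'I_4) : bool := ((v == 1 :> nat) || (v == 2 :> nat))%N.

Lemma cls_nd (a b : 'I_4) : cls a = cls b -> ~~ ((a + 2 == b :> nat) || (b + 2 == a :> nat))%N.
Proof.
case: a => [[|[|[|[|a]]]] Ha] //; case: b => [[|[|[|[|b]]]] Hb] //.
Qed.

Lemma lay_nd (a b j : 'I_4) :
  ~~ ((a == j :> nat) || (a == (j + 1) %% 4 :> nat))%N ->
  ~~ ((b == j :> nat) || (b == (j + 1) %% 4 :> nat))%N ->
  ~~ ((a + 2 == b :> nat) || (b + 2 == a :> nat))%N.
Proof.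
case: a => [[|[|[|[|a]]]] Ha] //; case: b => [[|[|[|[|b]]]] Hb] //;
case: j => [[|[|[|[|j]]]] Hj] //.
Qed.

Definition flip {d} (i : 'I_d) (b : {ffun 'I_d -> bool}) : {ffun 'I_d -> bool} :=
  [ffun k => if k == i then ~~ b k else b k].

Lemma flipK {d} (i : 'I_d) : involutive (flip i).
Proof.
move=> b; apply/ffunP => k; rewrite !ffunE; case: (k == i) => //; exact: negbK.
Qed.

Lemma card_half {d} (i : 'I_d) :
  #|[set b : {ffun 'I_d -> bool} | b i == false]| = (2 ^ d.-1)%N.
Proof.
set T := [set b : {ffun 'I_d -> bool} | b i == false].
have H1 : (#|T| + #|~: T| = 2 ^ d)%N by rewrite cardsC card_ffun card_bool card_ord.
have inj := can_inj (flipK i).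
have le1 : (#|T| <= #|~: T|)%N.
  rewrite -(card_imset T inj); apply: subset_leq_card; apply/subsetP => y.
  case/imsetP => b; rewrite !inE => /eqP hb ->; rewrite ffunE eqxx hb.
  done.
have le2 : (#|~: T| <= #|T|)%N.
  rewrite -(card_imset (~: T) inj); apply: subset_leq_card; apply/subsetP => y.
  case/imsetP => b; rewrite !inE => hb ->; rewrite ffunE eqxx.
  by case: (b i) hb.
have E : #|~: T| = #|T| by apply/eqP; rewrite eqn_leq le1 le2.
have dpos : (0 < d)%N by apply: leq_ltn_trans (ltn_ord i).
have e : (2 ^ d = 2 * 2 ^ d.-1)%N by rewrite -expnS prednK.
move: H1; rewrite E e; lia.
Qed.

Definition proj {d} (x : rep d) : {ffun 'I_d -> bool} := [ffun k => cls (x k)].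

Definition projI {d} (i : 'I_d) (x : rep d) : {ffun 'I_d -> bool} :=
  [ffun k => if k == i then false else cls (x k)].

Theorem lemma3 (d : nat) (X : {set rep d}) (delta : int) :
  (2 <= d)%N -> cube_packing X ->
  (#|X|%:Z = 2 ^+ d - delta) ->
  forall (i : 'I_d) (j : 'I_4), 2 ^+ d.-1 - delta <= (#|layer X i j|)%:Z.
Proof.
move=> d2 CP HX i j.
set L := layer X i j.
set L' := X :\: L.
have LX : L \subset X by apply/subsetP => x; rewrite inE => /andP[].
have Hc : #|X| = (#|L| + #|L'|)%N by rewrite cardsD (setIidPr LX) subnKC // subset_leq_card.
have inj : {in L' &, injective (projI i)}.
  move=> x y; rewrite !inE => /andP[xL xX] /andP[yL yX] E.
  apply/eqP; apply/negPn/negP => nxy.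
  case/existsP: (CP x y xX yX nxy) => k.
  apply/negP.
  have := congr1 (fun f : {ffun 'I_d -> bool} => f k) E; rewrite !ffunE.
  case: eqP => [-> _|_ /= hk]; last exact: cls_nd.
  move: xL yL; rewrite ?inE xX yX /=; exact: lay_nd.
have le : (#|L'| <= 2 ^ d.-1)%N.
  rewrite -(card_in_imset inj) -(card_half i); apply: subset_leq_card.
  apply/subsetP => y /imsetP [x _ ->]; by rewrite inE ffunE eqxx.
have e2 : (2 ^+ d : int) = 2 * 2 ^+ d.-1.
  by rewrite -exprS prednK // ltnW.
have le' : (#|L'|%:Z <= 2 ^+ d.-1).
  have -> : (2 ^+ d.-1 : int) = (2 ^ d.-1)%N%:Z by rewrite -natz natrX.
  by rewrite lez_nat.
move: HX; rewrite Hc e2 PoszD.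
move: le'; set P := (2 ^+ d.-1 : int); move=> le' HX.
lia.
Qed.
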